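(* Let $n=6$, $j_0=1$ and $j_i=3$ for all $i\in\mathbb Z/(6)\setminus\{0\}$. Define $\sigma_{(i,j)}(k,l)=(k+j,\ l-j_{k+j-i})$ on $X=(\mathbb Z/(6))^2$ and $r((i,j),(k,l))=(\sigma_{(i,j)}(k,l),\sigma^{-1}_{\sigma_{(i,j)}(k,l)}(i,j))$. Then $(X,r)$ is an indecomposable and irretractable solution of the YBE which is not simple.
   Context: A solution of the YBE is a pair $(X,r)$, $X$ nonempty, $r:X\times X\to X\times X$, $r(x,y)=(\sigma_x(y),\gamma_y(x))$, with $r^2=\mathrm{id}$, all $\sigma_x,\gamma_x$ bijective, and $r_{12}r_{23}r_{12}=r_{23}r_{12}r_{23}$ on $X^3$. Indecomposable: $\langle\sigma_x\rangle\le \mathrm{Sym}_X$ transitive on $X$. Irretractable: $\sigma_x\ne\sigma_y$ for $x\ne y$. A homomorphism of solutions $f:(X,r)\to(Y,s)$ (with $s(t,z)=(\sigma'_t(z),\gamma'_z(t))$) is a map with $f(\sigma_x(y))=\sigma'_{f(x)}(f(y))$; $(X,r)$ is simple if $|X|>1$ and every surjective homomorphism of solutions $f:(X,r)\to(Y,s)$ is bijective or has $|Y|=1$. *)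

(* Defs.v *)
From mathcomp Require Import all_boot all_order all_algebra.
From Stdlib Require Import Relations.
Set Implicit Arguments. Unset Strict Implicit. Unset Printing Implicit Defensive.
Import GRing.Theory.
Local Open Scope ring_scope.

Section YBE.
Variable X : Type.
Variable r : X * X -> X * X.

Definition ybe_sigma (x : X) : X -> X := fun y => (r (x, y)).1.
Definition ybe_gamma (y : X) : X -> X := fun x => (r (x, y)).2.

Definition r12 (t : X * X * X) : X * X * X :=
  let: (x, y, z) := t in let: (a, b) := r (x, y) in (a, b, z).
Definition r23 (t : X * X * X) : X * X * X :=
  let: (x, y, z) := t in let: (b, c) := r (y, z) in (x, b, c).

Definition is_solution : Prop :=
  [/\ inhabited X,
      (forall p, r (r p) = p),
      (forall x, bijective (ybe_sigma x)),
      (forall x, bijective (ybe_gamma x)) &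
      (forall t, r12 (r23 (r12 t)) = r23 (r12 (r23 t)))].

Definition sigma_step (a b : X) : Prop :=
  exists z, ybe_sigma z a = b \/ ybe_sigma z b = a.

(* the group <sigma_x | x in X> acts transitively on X:
   every y lies in the orbit of every x (orbit = reflexive-transitive closure
   of the steps by generators and their inverses) *)
Definition indecomposable : Prop :=
  forall x y : X, clos_refl_trans X sigma_step x y.

Definition irretractable : Prop :=
  forall x y : X, x <> y -> ybe_sigma x <> ybe_sigma y.
End YBE.

Definition sol_hom (X Y : Type) (r : X * X -> X * X) (s : Y * Y -> Y * Y)
  (f : X -> Y) : Prop :=
  forall x y : X, f (ybe_sigma r x y) = ybe_sigma s (f x) (f y).

Definition simple_solution (X : Type) (r : X * X -> X * X) : Prop :=
  (exists x y : X, x <> y) /\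
  forall (Y : Type) (s : Y * Y -> Y * Y) (f : X -> Y),
    is_solution s -> sol_hom r s f -> (forall y, exists x, f x = y) ->
    bijective f \/ (exists y0 : Y, forall y, y = y0).

Definition Z6 := 'Z_6.

Definition jj (i : Z6) : Z6 := if i == 0 then 1 else 3%:R.

Definition X6 := (Z6 * Z6)%type.

Definition sig6 (x y : X6) : X6 :=
  let: (i, j) := x in let: (k, l) := y in (k + j, l - jj (k + j - i)).

Definition sig6_inv (x y : X6) : X6 :=
  let: (i, j) := x in let: (a, b) := y in (a - j, b + jj (a - i)).

Lemma sig6K x : cancel (sig6 x) (sig6_inv x).
Proof. case: x => i j [k l] /=. by rewrite addrK subrK. Qed.

Lemma sig6_invK x : cancel (sig6_inv x) (sig6 x).
Proof. case: x => i j [a b] /=. by rewrite subrK addrK. Qed.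

Definition r6 (p : X6 * X6) : X6 * X6 :=
  let: (x, y) := p in (sig6 x y, sig6_inv (sig6 x y) x).

(* Main.v *)
Require Import Defs.
From mathcomp Require Import all_boot all_order all_algebra.
From Stdlib Require Import Relations.
From mathcomp Require Import ring.
Import GRing.Theory.
Local Open Scope ring_scope.

Definition l6 : seq Z6 := [seq inZp i | i <- iota 0 6].
Lemma mem_l6 (a : Z6) : a \in l6.
Proof.
apply/mapP; exists (val a); first by rewrite mem_iota /= (ltn_ord a).
by apply/val_inj; rewrite /= modn_small // (ltn_ord a).
Qed.
Definition allX : seq X6 := [seq (a, b) | a <- l6, b <- l6].
Lemma mem_allX (x : X6) : x \in allX.
Proof. case: x => a b; apply/allpairsP; exists (a, b); rewrite !mem_l6. by []. Qed.

Lemma all1X (P : X6 -> bool) : all P allX -> forall x, P x.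
Proof. by move=> /allP H x; apply: H; apply: mem_allX. Qed.

Lemma all2X (P : X6 -> X6 -> bool) :
  all (fun x => all (P x) allX) allX -> forall x y, P x y.
Proof. move=> /allP H x y. by move: (H x (mem_allX x)) => /allP /(_ y (mem_allX y)). Qed.

Lemma all3X (P : X6 -> X6 -> X6 -> bool) :
  all (fun x => all (fun y => all (P x y) allX) allX) allX -> forall x y z, P x y z.
Proof.
move=> H x y z. have := @all2X (fun x y => all (P x y) allX) H x y => /allP; apply; exact: mem_allX.
Qed.

Definition addN (a b : nat) : nat := ((a + b) %% 6)%N.
Definition oppN (a : nat) : nat := ((6 - a) %% 6)%N.
Definition subN a b := addN a (oppN b).
Definition jjN (t : nat) : nat := if t == 0%N then 1%N else 3%N.
Definition sN (x y : nat * nat) : nat * nat :=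
  let: (i, j) := x in let: (k, l) := y in (addN k j, subN l (jjN (subN (addN k j) i))).
Definition sinvN (x y : nat * nat) : nat * nat :=
  let: (i, j) := x in let: (a, b) := y in (subN a j, addN b (jjN (subN a i))).
Definition rN (p : (nat * nat) * (nat * nat)) :=
  let: (x, y) := p in (sN x y, sinvN (sN x y) x).
Definition enc (x : X6) : nat * nat := (val x.1, val x.2).

Lemma encS x y : enc (sig6 x y) = sN (enc x) (enc y).
Proof.
case: x y => i j [k l]; rewrite /sig6 /sN /enc /jj /jjN /=.
have E : ((k + j - i)%R == 0) = (subN (addN k j) i == 0%N) by [].
rewrite E; case: (subN (addN k j) i == 0%N); reflexivity.
Qed.
Lemma encSi x y : enc (sig6_inv x y) = sinvN (enc x) (enc y).
Proof.
case: x y => i j [k l]; rewrite /sig6_inv /sinvN /enc /jj /jjN /=.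
have E : ((k - i)%R == 0) = (subN k i == 0%N) by [].
rewrite E; case: (subN k i == 0%N); reflexivity.
Qed.

Definition encP (p : X6 * X6) := (enc p.1, enc p.2).
Definition encT (t : X6 * X6 * X6) := (enc t.1.1, enc t.1.2, enc t.2).
Lemma enc_inj : injective enc.
Proof. case=> a b [c d]; rewrite /enc /= => -[] /val_inj -> /val_inj -> //. Qed.
Lemma encT_inj : injective encT.
Proof.
case=> [[a b] c] [[d e] f] H.
have /enc_inj -> : enc a = enc d by exact: (congr1 (fun p => p.1.1) H).
have /enc_inj -> : enc b = enc e by exact: (congr1 (fun p => p.1.2) H).
have /enc_inj -> : enc c = enc f by exact: (congr1 (fun p => p.2) H).
by [].
Qed.
Lemma encP_inj : injective encP.
Proof.
case=> a b [c d] H.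
have /enc_inj -> : enc a = enc c by exact: (congr1 (fun p => p.1) H).
have /enc_inj -> : enc b = enc d by exact: (congr1 (fun p => p.2) H).
by [].
Qed.
Lemma encR p : encP (r6 p) = rN (encP p).
Proof. by case: p => x y; rewrite /r6 /rN /encP /= encSi encS. Qed.
Definition r12N (t : (nat * nat) * (nat * nat) * (nat * nat)) :=
  let: (x, y, z) := t in let: (a, b) := rN (x, y) in (a, b, z).
Definition r23N (t : (nat * nat) * (nat * nat) * (nat * nat)) :=
  let: (x, y, z) := t in let: (b, c) := rN (y, z) in (x, b, c).
Lemma enc12 t : encT (r12 r6 t) = r12N (encT t).
Proof.
case: t => [[x y] z].
change (encT (let: (a, b) := r6 (x, y) in (a, b, z)) =
        let: (a, b) := rN (enc x, enc y) in (a, b, enc z)).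
rewrite -[(enc x, enc y)]/(encP (x, y)) -encR.
by case: (r6 (x, y)).
Qed.
Lemma enc23 t : encT (r23 r6 t) = r23N (encT t).
Proof.
case: t => [[x y] z].
change (encT (let: (b, c) := r6 (y, z) in (x, b, c)) =
        let: (b, c) := rN (enc y, enc z) in (enc x, b, c)).
rewrite -[(enc y, enc z)]/(encP (y, z)) -encR.
by case: (r6 (y, z)).
Qed.

Definition braidb : bool := all (fun x => all (fun y => all (fun z =>
   r12N (r23N (r12N (encT (x,y,z)))) == r23N (r12N (r23N (encT (x,y,z))))) allX) allX) allX.
Lemma braid_ok : braidb. Proof. vm_compute. reflexivity. Qed.

Definition invb : bool := all (fun x => all (fun y => rN (rN (encP (x, y))) == encP (x, y)) allX) allX.
Lemma inv_ok : invb. Proof. vm_compute. reflexivity. Qed.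

Definition allN : seq (nat * nat) := map enc allX.
Definition gN (ey ex : nat * nat) := sinvN (sN ex ey) ex.
Definition ginvN (ey ez : nat * nat) : nat * nat :=
  nth (0%N, 0%N) allN (index ez (map (gN ey) allN)).
Definition ginvb : bool :=
  all (fun y => all (fun x => ginvN (enc y) (gN (enc y) (enc x)) == enc x) allX) allX.
Lemma ginv_ok : ginvb. Proof. vm_compute. reflexivity. Qed.

Definition irrb : bool :=
  all (fun x => all (fun y => (x == y) || has (fun z => sN (enc x) (enc z) != sN (enc y) (enc z)) allX) allX) allX.
Lemma irr_ok : irrb. Proof. vm_compute. reflexivity. Qed.

Definition f6 (x : X6) : bool := odd (enc x).2.
Definition homb : bool :=
  all (fun x => all (fun y => odd (sN (enc x) (enc y)).2 == ~~ f6 y) allX) allX.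
Lemma hom_ok : homb. Proof. vm_compute. reflexivity. Qed.

Definition sB (p : bool * bool) : bool * bool := let: (a, b) := p in (~~ b, ~~ a).

Lemma sB_sol : is_solution sB.
Proof.
split.
- exact: (inhabits true).
- by case=> [[] []].
- by move=> x; exists negb => y; rewrite /ybe_sigma /= negbK.
- by move=> x; exists negb => y; rewrite /ybe_gamma /= negbK.
- by case=> [[[] []] []].
Qed.

Lemma r6_sol : is_solution r6.
Proof.
split.
- exact: (inhabits (0, 0)).
- case=> x y; apply: encP_inj.
  rewrite !encR; apply/eqP; exact: (@all2X (fun x y => rN (rN (encP (x, y))) == encP (x, y)) inv_ok).
- by move=> x; exists (sig6_inv x); [exact: sig6K | exact: sig6_invK].
- move=> y; apply: injF_bij => a b E.
  have Eg : forall x, enc (ybe_gamma r6 y x) = gN (enc y) (enc x).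
    by move=> x; rewrite /ybe_gamma /r6 /= encSi encS.
  have Hg := @all2X (fun y x => ginvN (enc y) (gN (enc y) (enc x)) == enc x) ginv_ok y.
  apply: enc_inj; move/eqP: (Hg a) => <-; move/eqP: (Hg b) => <-.
  by rewrite -!Eg E.
- case=> [[x y] z]; apply: encT_inj; rewrite !(enc12, enc23); apply/eqP.
  exact: (@all3X (fun x y z => r12N (r23N (r12N (encT (x,y,z)))) == r23N (r12N (r23N (encT (x,y,z))))) braid_ok).
Qed.

Lemma crt_sym (a b : X6) : clos_refl_trans X6 (sigma_step r6) a b ->
  clos_refl_trans X6 (sigma_step r6) b a.
Proof.
elim=> [x y [z [H|H]]|x|x y w _ IH1 _ IH2].
- by apply: rt_step; exists z; right.
- by apply: rt_step; exists z; left.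
- exact: rt_refl.
- exact: rt_trans IH2 IH1.
Qed.

Notation crt := (clos_refl_trans X6 (sigma_step r6)).

Lemma S1 (k l : Z6) : crt (k, l) (k, l - 1).
Proof.
apply: rt_step; exists (k, 0); left.
by rewrite /ybe_sigma /= addr0 subrr.
Qed.

Lemma S2 (k l : Z6) m : crt (k, l) (k, l - m%:R).
Proof.
elim: m => [|m IH]; first by rewrite subr0; apply: rt_refl.
apply: rt_trans IH _.
have -> : l - m.+1%:R = (l - m%:R) - 1 by rewrite mulrSr; ring.
exact: S1.
Qed.

Lemma S3 (k l l' : Z6) : crt (k, l) (k, l').
Proof.
have := S2 k l (val (l - l')); rewrite natr_Zp.
by have -> : l - (l - l') = l' by ring.
Qed.

Lemma S4 (k l l' : Z6) : crt (k, l) (k + 1, l').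
Proof.
apply: rt_trans (S3 _ _ l').
apply: rt_step; exists (0, 1); left. by rewrite /ybe_sigma /=.
Qed.

Lemma S5 m (l : Z6) : crt (0, 0) (m%:R, l).
Proof.
elim: m l => [|m IH] l; first exact: S3.
apply: rt_trans (IH 0) _.
have -> : (m.+1%:R : Z6) = m%:R + 1 by rewrite mulrSr.
exact: S4.
Qed.

Lemma S6 (a b : Z6) : crt (0, 0) (a, b).
Proof. by have := S5 (val a) b; rewrite natr_Zp. Qed.

Theorem mainTheorem7 :
  [/\ is_solution r6, indecomposable r6, irretractable r6 & ~ simple_solution r6].
Proof.
split.
- exact: r6_sol.
- move=> [a b] [c d]; apply: rt_trans (S6 c d); apply: crt_sym; exact: S6.
- move=> x y nxy E.
  have := @all2X (fun x y => (x == y) || has (fun z => sN (enc x) (enc z) != sN (enc y) (enc z)) allX) irr_ok x y.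
  case/orP=> [/eqP//|/hasP [z _]]; rewrite /ybe_sigma in E.
  rewrite -!encS.
  have -> : sig6 x z = sig6 y z.
    by have := congr1 (fun g => g z) E; rewrite /r6.
  by rewrite eqxx.
- case=> _ /(_ _ sB f6 sB_sol) H.
  have hom : sol_hom r6 sB f6.
    move=> x y; rewrite /ybe_sigma /=; apply/eqP.
    rewrite /f6 encS.
    exact: (@all2X (fun x y => odd (sN (enc x) (enc y)).2 == ~~ f6 y) hom_ok).
  have sur : forall y, exists x, f6 x = y.
    by case; [exists (0, 1) | exists (0, 0)].
  case: (H hom sur) => [[g fK _] | [y0 Hy]].
  + have := can_inj fK (x1 := (0, 0)) (x2 := (0, 2%:R)) erefl.
    by move/(congr1 (fun p => val p.2)).
  + have h1 := Hy true; have h2 := Hy false; congruence.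
Qed.
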